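(* Let $E$ be an order complete vector lattice and let $T:E\to S(X)$ be Wickstead's representation of $E$, namely: $(B_\alpha)_{\alpha}$ is a family of pairwise disjoint bands of $E$, each with a weak unit $x_\alpha$, such that every $x\in E$ is written as $x=\bigvee_\alpha y_\alpha$ with $y_\alpha\in B_\alpha$; $X_\alpha$ are compact Hausdorff spaces and $T_\alpha:B_\alpha\to S(X_\alpha)$ injective lattice homomorphisms with $T_\alpha(x_\alpha)=\mathbf{1}_{X_\alpha}$ and the supremum-norm closure of $T_\alpha$ of the ideal generated by $x_\alpha$ in $B_\alpha$ equal to $C(X_\alpha)$; $X=\bigsqcup_\alpha X_\alpha$; and $T(x)=(T_\alpha(y_\alpha))_\alpha$ under the identification $S(X)=\prod_\alpha S(X_\alpha)$. Then $T(E)$ is an ideal of $S(X)$ (so $E$ can be considered as an ideal of $S(X)$).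
   Context: For a topological space $X$, $S(X)$ is the Archimedean vector lattice of equivalence classes of continuous real-valued functions defined on open dense subsets of $X$ (two functions identified if they agree on the intersection of their domains), with pointwise operations; $\mathbf{1}_X$ is the constant function $1$. For a disjoint union $X=\bigsqcup_\alpha X_\alpha$, $S(X)$ is identified with $\prod_\alpha S(X_\alpha)$ with the componentwise order. *)

(* Defs.v *)
From HB Require Import structures.
From mathcomp Require Import all_boot all_order all_algebra.
From mathcomp Require Import all_classical all_reals all_analysis.
Set Implicit Arguments. Unset Strict Implicit. Unset Printing Implicit Defensive.
Import Order.TTheory GRing.Theory Num.Theory.
Import numFieldNormedType.Exports.
Local Open Scope classical_set_scope.
Local Open Scope ring_scope.

Section VectorLattice.
Variables (R : realType) (E : lmodType R) (le : E -> E -> Prop).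

Definition is_ub (A : set E) (u : E) := forall a, A a -> le a u.
Definition is_sup (A : set E) (s : E) :=
  is_ub A s /\ forall u, is_ub A u -> le s u.

Record vector_lattice : Prop := {
  vl_refl : forall x, le x x;
  vl_antisym : forall x y, le x y -> le y x -> x = y;
  vl_trans : forall x y z, le x y -> le y z -> le x z;
  vl_add : forall x y z, le x y -> le (x + z) (y + z);
  vl_scale : forall (c : R) x y, 0 <= c -> le x y -> le (c *: x) (c *: y);
  vl_join : forall x y, exists s, is_sup [set x; y] s }.

Definition order_complete :=
  forall A : set E, A !=set0 -> (exists u, is_ub A u) -> exists s, is_sup A s.

Definition vjoin (x y : E) : E := xget 0 [set s | is_sup [set x; y] s].
Definition vmeet (x y : E) : E := - vjoin (- x) (- y).
Definition vabs (x : E) : E := vjoin x (- x).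
Definition vdisj (x y : E) : Prop := vmeet (vabs x) (vabs y) = 0.

Definition is_ideal (A : set E) : Prop :=
  A 0 /\ (forall x y, A x -> A y -> A (x + y)) /\
  (forall (c : R) x, A x -> A (c *: x)) /\
  (forall x y, A y -> le (vabs x) (vabs y) -> A x).

Definition is_band (B : set E) : Prop :=
  is_ideal B /\ forall (D : set E) s, D `<=` B -> is_sup D s -> B s.

Definition weak_unit (B : set E) (e : E) : Prop :=
  B e /\ le 0 e /\ forall y, B y -> vmeet (vabs y) e = 0 -> y = 0.

Definition gen_ideal (B : set E) (e : E) : set E :=
  [set z | B z /\ exists c : R, le (vabs z) (c *: e)].

End VectorLattice.

(* S(X): representatives are pairs (D, f) with D open dense and f      *)
(* continuous on D; classes are taken modulo agreement on the          *)
(* intersection of the domains.                                        *)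
Record Sfun (R : realType) (X : topologicalType) := MkSfun {
  sdom : set X; sfn : X -> R }.

Section SX.
Variables (R : realType) (X : topologicalType).
Implicit Types s t : Sfun R X.

Definition is_S s : Prop :=
  open (sdom s) /\ dense (sdom s) /\ {within sdom s, continuous (sfn s)}.

Definition Seq s t : Prop :=
  forall x, sdom s x -> sdom t x -> sfn s x = sfn t x.
Definition Sle s t : Prop :=
  forall x, sdom s x -> sdom t x -> sfn s x <= sfn t x.

Definition Sadd s t : Sfun R X :=
  MkSfun (sdom s `&` sdom t) (fun x => sfn s x + sfn t x).
Definition Sscale (c : R) s : Sfun R X := MkSfun (sdom s) (fun x => c * sfn s x).
Definition Sjoin s t : Sfun R X :=
  MkSfun (sdom s `&` sdom t) (fun x => Num.max (sfn s x) (sfn t x)).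
Definition Sabs s : Sfun R X := MkSfun (sdom s) (fun x => `|sfn s x|).
Definition Sone : Sfun R X := MkSfun setT (fun _ => 1).

Definition in_sup_closure (A : set (Sfun R X)) s : Prop :=
  forall eps : R, 0 < eps -> exists a, A a /\
    forall x, sdom s x -> sdom a x -> `|sfn s x - sfn a x| <= eps.

Definition in_CX s : Prop :=
  exists f : X -> R, continuous f /\ Seq s (MkSfun setT f).
End SX.

Definition injective_lattice_hom (R : realType) (E : lmodType R)
  (le : E -> E -> Prop) (B : set E) (X : topologicalType)
  (T : E -> Sfun R X) : Prop :=
  (forall y, B y -> is_S (T y)) /\
  (forall y z, B y -> B z -> Seq (T (y + z)) (Sadd (T y) (T z))) /\
  (forall (c : R) y, B y -> Seq (T (c *: y)) (Sscale c (T y))) /\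
  (forall y z, B y -> B z -> Seq (T (vjoin le y z)) (Sjoin (T y) (T z))) /\
  (forall y z, B y -> B z -> Seq (T y) (T z) -> y = z).

(* Main.v *)
Require Import Defs.
From mathcomp Require Import all_boot all_order all_algebra.
From mathcomp Require Import all_classical all_reals all_analysis.
From mathcomp Require Import ring lra.
Import Order.TTheory GRing.Theory Num.Theory.
Import numFieldNormedType.Exports.
Local Open Scope classical_set_scope.
Local Open Scope ring_scope.

Set Implicit Arguments.

Section Lat.
Context (R : realType) (E : lmodType R) (le : E -> E -> Prop)
  (VL : vector_lattice le).

Lemma lrefl x : le x x. Proof. exact (vl_refl VL x). Qed.
Lemma ltrans x y z : le x y -> le y z -> le x z. Proof. exact (vl_trans VL (x:=x) (y:=y) (z:=z)). Qed.
Lemma lanti x y : le x y -> le y x -> x = y. Proof. exact (vl_antisym VL (x:=x) (y:=y)). Qed.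
Lemma le_addr z x y : le x y -> le (x + z) (y + z). Proof. exact (vl_add VL (x:=x) (y:=y) z). Qed.
Lemma le_addl z x y : le x y -> le (z + x) (z + y).
Proof. by move=> h; rewrite ![z + _]addrC; apply: le_addr. Qed.
Lemma le_add2 a b c d : le a b -> le c d -> le (a + c) (b + d).
Proof. move=> h1 h2; apply: (ltrans (le_addr c h1)); exact: le_addl. Qed.
Lemma le_addrE z x y : le (x + z) (y + z) -> le x y.
Proof. by move=> /(le_addr (-z)); rewrite !addrK. Qed.
Lemma le_opp x y : le x y -> le (-y) (-x).
Proof.
move=> /(le_addr (-x - y)).
have -> : x + (- x - y) = - y by rewrite addrA subrr add0r.
by have -> : y + (- x - y) = - x by rewrite addrCA subrr addr0.
Qed.
Lemma le_oppE x y : le (-y) (-x) -> le x y.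
Proof. by move=> /le_opp; rewrite !opprK. Qed.
Lemma le_sub0 x y : le x y -> le 0 (y - x).
Proof. by move=> /(le_addr (-x)); rewrite subrr. Qed.
Lemma le_0sub x y : le 0 (y - x) -> le x y.
Proof. by move=> /(le_addr x); rewrite add0r subrK. Qed.
Lemma le_scale (c : R) x y : 0 <= c -> le x y -> le (c *: x) (c *: y).
Proof. exact (vl_scale VL (c:=c) (x:=x) (y:=y)). Qed.
Lemma le_addp x p : le 0 p -> le x (x + p).
Proof. by move=> /(le_addl x); rewrite addr0. Qed.
Lemma le_subp x p : le 0 p -> le (x - p) x.
Proof. by move=> /(le_addl (x - p)); rewrite addr0 subrK. Qed.

Lemma is_sup_uniq A s t : is_sup le A s -> is_sup le A t -> s = t.
Proof. by move=> [s1 s2] [t1 t2]; apply: lanti; [apply: s2|apply: t2]. Qed.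

Notation vjoin := (vjoin le).
Notation vmeet := (vmeet le).
Notation vabs := (vabs le).
Notation vdisj := (vdisj le).

Lemma vjoinP x y : is_sup le [set x; y] (vjoin x y).
Proof. rewrite /Defs.vjoin; exact: (xgetPex 0 (vl_join VL x y)). Qed.
Lemma vjoin_l x y : le x (vjoin x y).
Proof. by apply: (vjoinP x y).1; left. Qed.
Lemma vjoin_r x y : le y (vjoin x y).
Proof. by apply: (vjoinP x y).1; right. Qed.
Lemma join_lub x y u : le x u -> le y u -> le (vjoin x y) u.
Proof. by move=> h1 h2; apply: (vjoinP x y).2 => a [->|->]. Qed.
Lemma join_eq x y : le x y -> vjoin x y = y.
Proof. move=> h; apply: lanti; [exact: join_lub (lrefl _)| exact: vjoin_r]. Qed.
Lemma join_eq' x y : le y x -> vjoin x y = x.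
Proof. move=> h; apply: lanti; [exact: join_lub (lrefl _) _| exact: vjoin_l]. Qed.
Lemma vjoinC x y : vjoin x y = vjoin y x.
Proof. by apply: lanti; apply: join_lub; [apply: vjoin_r|apply: vjoin_l|apply: vjoin_r|apply: vjoin_l]. Qed.
Lemma join_mono a b r : le a b -> le (vjoin a r) (vjoin b r).
Proof. move=> h; apply: join_lub; [exact: ltrans h (vjoin_l _ _)|exact: vjoin_r]. Qed.
Lemma join_addr x y z : vjoin (x + z) (y + z) = vjoin x y + z.
Proof.
apply: lanti.
  by apply: join_lub; apply: le_addr; [apply: vjoin_l|apply: vjoin_r].
suff h : le (vjoin x y) (vjoin (x + z) (y + z) - z).
  by have := le_addr z h; rewrite subrK.
apply: join_lub.
  by have := le_addr (-z) (vjoin_l (x + z) (y + z)); rewrite addrK.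
by have := le_addr (-z) (vjoin_r (x + z) (y + z)); rewrite addrK.
Qed.
Lemma join_scale (c : R) x y : 0 < c -> vjoin (c *: x) (c *: y) = c *: vjoin x y.
Proof.
move=> c0; have c0' : 0 <= c by exact: ltW.
have ci : 0 <= c^-1 by rewrite invr_ge0.
have K v : c *: (c^-1 *: v) = v by rewrite scalerA mulfV ?gt_eqF // scale1r.
have K' v : c^-1 *: (c *: v) = v by rewrite scalerA mulVf ?gt_eqF // scale1r.
apply: lanti.
  by apply: join_lub; apply: le_scale => //; [apply: vjoin_l|apply: vjoin_r].
rewrite -[X in le _ X]K; apply: le_scale => //; apply: join_lub.
  by rewrite -[X in le X _]K'; apply: le_scale => //; apply: vjoin_l.
by rewrite -[X in le X _]K'; apply: le_scale => //; apply: vjoin_r.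
Qed.

Lemma vmeet_l x y : le (vmeet x y) x.
Proof. by apply: le_oppE; rewrite /Defs.vmeet opprK; apply: vjoin_l. Qed.
Lemma vmeet_r x y : le (vmeet x y) y.
Proof. by apply: le_oppE; rewrite /Defs.vmeet opprK; apply: vjoin_r. Qed.
Lemma meet_glb x y u : le u x -> le u y -> le u (vmeet x y).
Proof.
move=> h1 h2; apply: le_oppE; rewrite /Defs.vmeet opprK.
by apply: join_lub; apply: le_opp.
Qed.
Lemma meet_eq x y : le x y -> vmeet x y = x.
Proof. move=> h; apply: lanti; [exact: vmeet_l|exact: meet_glb (lrefl _) h]. Qed.
Lemma meet_mono a b r : le a b -> le (vmeet a r) (vmeet b r).
Proof. move=> h; apply: meet_glb; [exact: ltrans (vmeet_l _ _) h|exact: vmeet_r]. Qed.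
Lemma join_meet x y : vjoin x y + vmeet x y = x + y.
Proof.
rewrite /Defs.vmeet.
have -> : vjoin x y = vjoin (-y) (-x) + (x + y).
  have e1 : -y + (x + y) = x by rewrite addrCA addNr addr0.
  have e2 : -x + (x + y) = y by rewrite addrA addNr add0r.
  by rewrite -join_addr e1 e2.
by rewrite [vjoin (-y) _]vjoinC addrAC subrr add0r.
Qed.
Lemma meet_scale (c : R) x y : 0 < c -> vmeet (c *: x) (c *: y) = c *: vmeet x y.
Proof. by move=> c0; rewrite /Defs.vmeet -!scalerN join_scale // scalerN. Qed.

Lemma abs_ge x : le x (vabs x). Proof. exact: vjoin_l. Qed.
Lemma abs_geN x : le (-x) (vabs x). Proof. exact: vjoin_r. Qed.
Lemma abs_lub x u : le x u -> le (-x) u -> le (vabs x) u.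
Proof. exact: join_lub. Qed.

Lemma abs_ge0 x : le 0 (vabs x).
Proof.
have h : le 0 (vabs x + vabs x).
  by rewrite -(subrr x); apply: le_add2; [apply: abs_ge|apply: abs_geN].
have hp : (0:R) <= 2^-1 by rewrite invr_ge0 ler0n.
have := le_scale (2^-1) hp h.
have e : vabs x + vabs x = 2 *: vabs x by rewrite scaler_nat mulr2n.
by rewrite scaler0 e scalerA mulVf ?pnatr_eq0 // scale1r.
Qed.
Lemma le0_opp p : le 0 p -> le (-p) p.
Proof. by move=> h; apply: (ltrans _ h); rewrite -oppr0; apply: le_opp. Qed.
Lemma abs_pos x : le 0 x -> vabs x = x.
Proof. by move=> h; apply: join_eq'; apply: le0_opp. Qed.
Lemma abs_opp x : vabs (-x) = vabs x.
Proof. by rewrite /Defs.vabs opprK vjoinC. Qed.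
Lemma abs0 : vabs 0 = 0. Proof. exact/abs_pos/lrefl. Qed.
Lemma abs_eq0 x : vabs x = 0 -> x = 0.
Proof.
move=> h; apply: lanti; first by rewrite -h; apply: abs_ge.
by apply: le_oppE; rewrite oppr0 -h; apply: abs_geN.
Qed.
Lemma abs_tri x y : le (vabs (x + y)) (vabs x + vabs y).
Proof.
apply: abs_lub; first by apply: le_add2; apply: abs_ge.
by rewrite opprD; apply: le_add2; apply: abs_geN.
Qed.
Lemma abs_scale (c : R) x : vabs (c *: x) = `|c| *: vabs x.
Proof.
have pos d v : 0 < d -> vabs (d *: v) = d *: vabs v.
  by move=> d0; rewrite /Defs.vabs -scalerN join_scale.
case: (ltgtP c 0) => [c0|c0|->].
- have -> : c *: x = (-c) *: (-x) by rewrite scaleNr scalerN opprK.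
  by rewrite pos ?oppr_gt0 // abs_opp ltr0_norm.
- by rewrite pos // gtr0_norm.
- by rewrite normr0 !scale0r abs0.
Qed.
Lemma meet0 r : le 0 r -> vmeet 0 r = 0.
Proof. exact: meet_eq. Qed.
Lemma meet_ge0 a r : le 0 a -> le 0 r -> le 0 (vmeet a r).
Proof. exact: meet_glb. Qed.

Lemma meet_sum p q r : le 0 p -> le 0 q -> le 0 r ->
  le (vmeet (p + q) r) (vmeet p r + vmeet q r).
Proof.
move=> p0 q0 r0; set w := vmeet (p + q) r.
suff h : le (w - vmeet p r) (vmeet q r).
  by have := le_addr (vmeet p r) h; rewrite subrK addrC.
have e : w - vmeet p r = vjoin (-p + w) (-r + w).
  by rewrite join_addr /Defs.vmeet opprK addrC.
apply: meet_glb.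
  rewrite e; apply: join_lub.
    by have := le_addl (-p) (vmeet_l (p + q) r); rewrite addKr.
  by have := le_addl (-r) (vmeet_r (p + q) r); rewrite addNr => h; apply: ltrans h q0.
apply: (ltrans _ (vmeet_r (p + q) r)); apply: le_subp; exact: meet_ge0.
Qed.

Lemma vdisj0 g : vdisj 0 g.
Proof. by rewrite /Defs.vdisj abs0 meet0 //; apply: abs_ge0. Qed.
Lemma vdisj_add u v g : vdisj u g -> vdisj v g -> vdisj (u + v) g.
Proof.
rewrite /Defs.vdisj => h1 h2; apply: lanti; last exact: meet_ge0 (abs_ge0 _) (abs_ge0 _).
apply: ltrans (meet_mono _ (abs_tri u v)) _.
by rewrite -[0](addr0 0) -[X in le _ (X + _)]h1 -h2; apply: meet_sum; apply: abs_ge0.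
Qed.
Lemma vdisj_scale (c : R) v g : c != 0 -> vdisj v (c^-1 *: g) -> vdisj (c *: v) g.
Proof.
rewrite /Defs.vdisj => c0 h.
have cp : 0 < `|c| by rewrite normr_gt0.
have -> : vabs g = `|c| *: vabs (c^-1 *: g).
  by rewrite abs_scale scalerA normfV mulfV ?gt_eqF // scale1r.
by rewrite abs_scale meet_scale // h scaler0.
Qed.
Lemma vdisj_self x : vdisj x x -> x = 0.
Proof. rewrite /Defs.vdisj => h; apply: abs_eq0; by rewrite -h meet_eq //; apply: lrefl. Qed.
Lemma vdisj_solid u v g : le (vabs v) (vabs u) -> vdisj u g -> vdisj v g.
Proof.
rewrite /Defs.vdisj => h1 h2; apply: lanti; last exact: meet_ge0 (abs_ge0 _) (abs_ge0 _).
by rewrite -h2; apply: meet_mono.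
Qed.

Lemma posneg x : vjoin x 0 - vjoin (-x) 0 = x.
Proof.
have := join_meet x 0; rewrite addr0 /Defs.vmeet oppr0 => e.
by rewrite -[X in _ = X]e.
Qed.

Lemma sup_disj (A : set E) S r : A !=set0 -> is_sup le A S -> le 0 r ->
  (forall w, A w -> le 0 w /\ vmeet w r = 0) -> vmeet S r = 0.
Proof.
move=> [w0 Aw0] [Sub Sl] r0 hA.
have S0 : le 0 S by apply: ltrans (hA _ Aw0).1 (Sub _ Aw0).
apply: lanti; last exact: meet_ge0.
have key : le S (vjoin S r - r).
  apply: Sl => w Aw; have [w0' wr] := hA w Aw.
  have := join_meet w r; rewrite wr addr0 => e.
  have -> : w = vjoin w r - r by rewrite e addrK.
  by apply: le_addr; apply: join_mono; apply: Sub.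
have e := join_meet S r.
have -> : vmeet S r = S + r - vjoin S r by rewrite -e addrAC subrr add0r.
apply: le_0sub; rewrite sub0r opprB.
have := le_addr r key; rewrite subrK => h.
by apply: le_sub0.
Qed.

End Lat.

Section Band.
Context (R : realType) (E : lmodType R) (le : E -> E -> Prop)
  (VL : vector_lattice le) (B : set E) (hB : is_band le B).

Lemma B0 : B 0. Proof. by case: hB => [[]]. Qed.
Lemma Badd x y : B x -> B y -> B (x + y). Proof. by case: hB => [[_ [h _]] _]; apply: h. Qed.
Lemma Bscale (c : R) x : B x -> B (c *: x). Proof. by case: hB => [[_ [_ [h _]]] _]; apply: h. Qed.
Lemma Bsolid x y : B y -> le (vabs le x) (vabs le y) -> B x.
Proof. by case: hB => [[_ [_ [_ h]]]] _; apply: h. Qed.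
Lemma Bopp x : B x -> B (- x). Proof. by move=> h; rewrite -scaleN1r; apply: Bscale. Qed.
Lemma Bsub x y : B x -> B y -> B (x - y). Proof. by move=> ??; apply: Badd => //; apply: Bopp. Qed.
Lemma Bjoin x y : B x -> B y -> B (vjoin le x y).
Proof.
move=> hx hy; case: hB => _ h; apply: (h [set x; y]); last exact: vjoinP.
by move=> z [->|->].
Qed.
Lemma Bmeet x y : B x -> B y -> B (vmeet le x y).
Proof. by move=> hx hy; apply: Bopp; apply: Bjoin; apply: Bopp. Qed.
Lemma Babs x : B x -> B (vabs le x).
Proof. by move=> hx; apply: Bjoin => //; apply: Bopp. Qed.

Context (P : E -> E)
  (hP : forall x, B (P x) /\ forall b, B b -> vdisj le (x - P x) b).

Lemma P_uniq x u : B u -> (forall b, B b -> vdisj le (x - u) b) -> P x = u.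
Proof.
move=> Bu hu; have [BP hPx] := hP x.
set d := P x - u.
have Bd : B d by apply: Bsub.
have e : d = (x - u) + (-1) *: (x - P x).
  by rewrite scaleN1r opprB addrC addrA subrK.
have : vdisj le d d.
  rewrite {1}e; apply: (vdisj_add VL) => //; first exact: hu.
  apply: (vdisj_scale VL); first by rewrite oppr_eq0 oner_eq0.
  by apply: hPx; apply: Bscale.
by move/(vdisj_self VL)/eqP; rewrite subr_eq0 => /eqP.
Qed.

Lemma P_id u : B u -> P u = u.
Proof. by move=> Bu; apply: P_uniq => // b _; rewrite subrr; apply: (vdisj0 VL). Qed.

Lemma P_add x y : P (x + y) = P x + P y.
Proof.
apply: P_uniq; first by apply: Badd; [apply: (hP x).1|apply: (hP y).1].
move=> b Bb.
have -> : x + y - (P x + P y) = (x - P x) + (y - P y).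
  by rewrite opprD addrACA.
by apply: (vdisj_add VL) => //; [apply: (hP x).2|apply: (hP y).2].
Qed.

Lemma P_scale (c : R) x : P (c *: x) = c *: P x.
Proof.
have [->|c0] := eqVneq c 0.
  by rewrite !scale0r; apply: P_id; apply: B0.
apply: P_uniq; first by apply: Bscale; apply: (hP x).1.
move=> b Bb; rewrite -scalerBr; apply: vdisj_scale => //.
by apply: (hP x).2; apply: Bscale.
Qed.

Lemma P_opp x : P (- x) = - P x.
Proof. by rewrite -scaleN1r P_scale scaleN1r. Qed.
Lemma P_sub x y : P (x - y) = P x - P y.
Proof. by rewrite P_add P_opp. Qed.

Lemma P_pos x : le 0 x -> le 0 (P x).
Proof.
move=> x0; set u := P x; have [Bu hu] := hP x.
set m := vjoin le (- u) 0.
have Bm : B m by apply: Bjoin; [apply: Bopp|apply: B0].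
set v := x - u.
have dm : vdisj le v m by apply: hu.
have m0 : le 0 m.
  exact: (vjoin_r VL).
have mv : le m (vabs le v).
  apply: (ltrans VL _ (vjoin le v 0)).
    apply: (join_mono VL) => //; apply: (le_0sub VL); rewrite opprK /v subrK //.
  by apply: (join_lub VL) => //; [apply: (abs_ge VL)|apply: (abs_ge0 VL)].
have m00 : m = 0.
  apply: (lanti VL) => //.
  move: dm; rewrite /vdisj (abs_pos VL _ m0) => <-.
  by apply: (meet_glb VL) => //; apply: (lrefl VL).
rewrite -(posneg VL u) -/m m00 subr0; exact: (vjoin_r VL).
Qed.

Lemma P_mono x y : le x y -> le (P x) (P y).
Proof.
move=> h; apply: (le_0sub VL) => //; rewrite -P_sub; apply: P_pos.
exact: (le_sub0 VL).
Qed.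

Lemma P_abs x : le (vabs le (P x)) (P (vabs le x)).
Proof.
apply: (abs_lub VL) => //; first by apply: P_mono; apply: (abs_ge VL).
by rewrite -P_opp; apply: P_mono; apply: (abs_geN VL).
Qed.

End Band.

Unset Implicit Arguments.
Ltac din := by rewrite !inE ?eqxx ?orbT ?orTb.
Ltac lDtac := let y := fresh in move=> y; rewrite !inE;
  repeat (case/orP; [by move/eqP->|]); by move/eqP->.


Section Topo.
Context (R : realType) (X : topologicalType).

Lemma near_open (f g : X -> R) (D1 : set X) q (c : R) : open D1 -> D1 q ->
  f @ q --> f q -> g @ q --> g q -> c < f q - g q ->
  exists V : set X, [/\ open V, V q, V `<=` D1 & forall r, V r -> c < f r - g r].
Proof.
move=> oD1 D1q cf cg cq.
have h1 : \forall t \near q, c < (f - g) t.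
  exact: (cvgr_gt (f := f - g) (f q - g q) (cvgB cf cg)).
have h2 : \forall t \near q, D1 t by apply: open_nbhs_nbhs.
have h3 : \forall t \near q, D1 t /\ c < (f - g) t.
  by near=> t; split; near: t.
move: h3; rewrite /prop_near1 nbhsE => -[V [oV Vq] sV].
exists V; split => //; first by move=> r /sV [].
by move=> r /sV [].
Unshelve. all: by end_near.
Qed.

Lemma dense_ex (D O : set X) x : dense D -> open O -> O x -> exists r, O r /\ D r.
Proof.
move=> dD oO Ox; have [r [Or Dr]] : O `&` D !=set0 by apply: dD => //; exists x.
by exists r.
Qed.

Lemma dense_le (f g : X -> R) (D1 D : set X) : open D1 -> dense D ->
  (forall q, D1 q -> f @ q --> f q) -> (forall q, D1 q -> g @ q --> g q) ->
  (forall q, D1 q -> D q -> f q <= g q) -> forall q, D1 q -> f q <= g q.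
Proof.
move=> oD1 dD cf cg h q D1q; rewrite leNgt; apply/negP => lt.
have lt' : 0 < f q - g q by rewrite subr_gt0.
have [V [oV Vq sV hV]] := near_open f g D1 q 0 oD1 D1q (cf q D1q) (cg q D1q) lt'.
have [r [Vr Dr]] := dense_ex D V q dD oV Vq.
have := hV r Vr; rewrite subr_gt0 ltNge => /negP; apply.
by apply: h => //; apply: sV.
Qed.

Lemma dense_eq (f g : X -> R) (D1 D : set X) : open D1 -> dense D ->
  (forall q, D1 q -> f @ q --> f q) -> (forall q, D1 q -> g @ q --> g q) ->
  (forall q, D1 q -> D q -> f q = g q) -> forall q, D1 q -> f q = g q.
Proof.
move=> oD1 dD cf cg h q D1q; apply/eqP; rewrite eq_le; apply/andP; split.
  by apply: (dense_le f g D1 D oD1 dD cf cg) => // r ? ?; rewrite h.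
by apply: (dense_le g f D1 D oD1 dD cg cf) => // r ? ?; rewrite h.
Qed.

Lemma is_S_cont (s : Sfun R X) q : is_S s -> sdom s q -> sfn s @ q --> sfn s q.
Proof.
move=> [oS [_ c]] sq; move: c; rewrite continuous_open_subspace // => c.
by apply: c; rewrite in_setE.
Qed.

Lemma S_le_ext (s1 s2 : Sfun R X) (D : set X) : is_S s1 -> is_S s2 -> dense D ->
  (forall q, sdom s1 q -> sdom s2 q -> D q -> sfn s1 q <= sfn s2 q) ->
  forall q, sdom s1 q -> sdom s2 q -> sfn s1 q <= sfn s2 q.
Proof.
move=> h1 h2 dD h q q1 q2.
have o1 : open (sdom s1 `&` sdom s2) by apply: openI; [case: h1|case: h2].
apply: (dense_le _ _ _ _ o1 dD _ _ _ q (conj q1 q2)).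
- by move=> r [r1 _]; apply: is_S_cont.
- by move=> r [_ r2]; apply: is_S_cont.
by move=> r [r1 r2] rD; apply: h.
Qed.

End Topo.



Section Comp.
Context (R : realType) (E : lmodType R) (le : E -> E -> Prop)
  (VL : vector_lattice le) (X : topologicalType) (B : set E)
  (hB : is_band le B) (T : E -> Sfun R X)
  (hT : injective_lattice_hom le B T)
  (xu : E) (Bxu : B xu)
  (hxu : Seq (T xu) (Sone R X))
  (hcl : forall s, is_S s -> in_CX s -> in_sup_closure (T @` gen_ideal le B xu) s)
  (hC : compact [set: X]) (hH : hausdorff_space X)
  (oc : order_complete le).

Lemma bB0 : B 0. Proof. exact: (B0 hB). Qed.
Lemma bBadd x y : B x -> B y -> B (x + y). Proof. exact: (Badd hB x y). Qed.
Lemma bBscale a x : B x -> B (a *: x). Proof. exact: (Bscale hB a x). Qed.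
Lemma bBopp x : B x -> B (- x). Proof. exact: (Bopp hB x). Qed.
Lemma bBsub x y : B x -> B y -> B (x - y). Proof. exact: (Bsub hB x y). Qed.
Lemma bBjoin x y : B x -> B y -> B (vjoin le x y). Proof. exact: (Bjoin VL hB x y). Qed.
Lemma bBmeet x y : B x -> B y -> B (vmeet le x y). Proof. exact: (Bmeet VL hB x y). Qed.

Definition Dm y := sdom (T y).
Definition val y := sfn (T y).

Lemma TS y : B y -> is_S (T y). Proof. by case: hT => h _; apply: h. Qed.
Lemma Dm_open y : B y -> open (Dm y). Proof. by move/TS => []. Qed.
Lemma Dm_dense y : B y -> dense (Dm y). Proof. by move/TS => [_ []]. Qed.
Lemma val_cont y q : B y -> Dm y q -> val y @ q --> val y q.
Proof. by move=> By; apply: is_S_cont; apply: TS. Qed.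

Definition Dall (l : seq E) (q : X) : Prop := forall y, y \in l -> Dm y q.

Lemma Dall_od l : (forall y, y \in l -> B y) -> open (Dall l) /\ dense (Dall l).
Proof.
elim: l => [|y l IH] hl.
  have -> : Dall [::] = setT.
    by apply/funext => q; apply/propext; split => // _ y; rewrite in_nil.
  by split; [exact: openT| move=> O [x Ox] _; exists x].
have -> : Dall (y :: l) = Dm y `&` Dall l.
  apply/funext => q; apply/propext; split.
    by move=> h; split; [apply: h; rewrite inE eqxx | move=> z zl; apply: h; rewrite inE zl orbT].
  by move=> [h1 h2] z; rewrite inE => /orP [/eqP -> // | /h2].
have By : B y by apply: hl; rewrite inE eqxx.
have [oL dL] : open (Dall l) /\ dense (Dall l).
  by apply: IH => z zl; apply: hl; rewrite inE zl orbT.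
split; first by apply: openI => //; apply: Dm_open.
by apply: denseI => //; [apply: Dm_open|apply: Dm_dense].
Qed.

Lemma val_add y z q : B y -> B z -> Dm (y + z) q -> Dm y q -> Dm z q ->
  val (y + z) q = val y q + val z q.
Proof.
case: hT => _ [hadd _] By Bz h1 h2 h3.
exact: (hadd y z By Bz q h1 (conj h2 h3)).
Qed.
Lemma val_scale c y q : B y -> Dm (c *: y) q -> Dm y q ->
  val (c *: y) q = c * val y q.
Proof.
case: hT => _ [_ [hsc _]] By h1 h2.
exact: (hsc c y By q h1 h2).
Qed.
Lemma val_join y z q : B y -> B z -> Dm (vjoin le y z) q -> Dm y q -> Dm z q ->
  val (vjoin le y z) q = Num.max (val y q) (val z q).
Proof.
case: hT => _ [_ [_ [hj _]]] By Bz h1 h2 h3.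
exact: (hj y z By Bz q h1 (conj h2 h3)).
Qed.
Lemma val_opp y q : B y -> Dm (- y) q -> Dm y q -> val (- y) q = - val y q.
Proof.
move=> By; have := val_scale (-1) y q By; rewrite scaleN1r mulN1r; exact.
Qed.
Lemma val0 q : Dm 0 q -> val 0 q = 0.
Proof.
move=> h; have := val_scale 0 0 q bB0; rewrite scale0r mul0r; apply => //.
Qed.
Lemma inj y z : B y -> B z -> Seq (T y) (T z) -> y = z.
Proof. by case: hT => _ [_ [_ [_ hi]]]; apply: hi. Qed.

Lemma mono_val y z q : B y -> B z -> le y z -> Dm y q -> Dm z q ->
  val y q <= val z q.
Proof.
move=> By Bz yz h1 h2.
have := val_join y z q By Bz; rewrite (join_eq VL _ _ yz) => ->//.
by rewrite le_max lexx.
Qed.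

Lemma reflect_le y z (D : set X) : B y -> B z -> dense D ->
  (forall q, Dm y q -> Dm z q -> D q -> val y q <= val z q) -> le y z.
Proof.
move=> By Bz dD h.
set j := vjoin le y z.
have Bj : B j by apply: bBjoin.
suff -> : z = j by apply: vjoin_l.
apply: esym; apply: inj => // q h1 h2.
have oD1 : open (Dm j `&` Dm z) by apply: openI; apply: Dm_open.
have dD' : dense (Dm y `&` D) by apply: denseI => //; [apply: Dm_open|apply: Dm_dense].
apply: (dense_eq _ _ _ _ _ _ oD1 dD' _ _ _ q (conj h1 h2)).
- by move=> r [r1 _]; apply: val_cont.
- by move=> r [_ r2]; apply: val_cont.
move=> r [r1 r2] [r3 r4].
change (val j r = val z r); rewrite /j val_join // max_r //; exact: h.
Qed.

Lemma bump (q : X) (V : set X) (e : R) : open V -> V q -> 0 < e ->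
  exists b (D0 N : set X), [/\ B b, le 0 b, open D0 /\ dense D0, open N /\ N q &
   forall r, Dm b r -> D0 r ->
     [/\ val b r <= e, (~ V r -> val b r = 0) & (N r -> 0 < val b r)]].
Proof.
move=> oV Vq e0.
have nX : normal_space X := compact_normal hH hC.
have cq : closed [set q] := @accessible_closed_set1 X (hausdorff_accessible hH) q.
have cV : closed (~` V) := open_closedC oV.
have dis : (~` V) `&` [set q] = set0.
  by apply/seteqP; split => // r [nV /= rq]; apply: nV; rewrite rq.
have us := (@normal_separatorP R X).1 nX _ _ cV cq dis.
have [phi [cphi rphi phi0 phi1]] := (@uniform_separatorP X R _ _).1 us.
have phir r : 0 <= phi r <= 1.
  by have := rphi (phi r) (imageT _ _); rewrite /= in_itv.
have phiV r : ~ V r -> phi r = 0 by move=> h; apply: phi0; exists r.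
have phiq : phi q = 1 by apply: phi1; exists q.
pose s' := MkSfun (@setT X) phi.
have Ss' : is_S s'.
  split; first exact: openT.
  split; first by move=> O [x Ox] _; exists x.
  exact: continuous_subspaceT.
have Cs' : in_CX s' by exists phi; split.
have d0 : (0:R) < 8^-1 by rewrite invr_gt0.
have [a [[w [Bw _] <-] ha]] := hcl s' Ss' Cs' (8^-1) d0.
set c := w + (- 8^-1) *: xu.
set m := vjoin le c 0.
set b := e *: m.
have Bxu' : B ((- 8^-1) *: xu) by apply: bBscale.
have Bc : B c by apply: bBadd.
have B0' : B 0 := bB0.
have Bm : B m by apply: bBjoin.
have Bb : B b by apply: bBscale.
have m0 : le 0 m by apply: (vjoin_r VL).
have b0 : le 0 b.
  by have := le_scale VL e _ _ (ltW e0) m0; rewrite scaler0.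
have lD : forall y, y \in [:: w; xu; (- 8^-1) *: xu; c; m; 0] -> B y.
  by move=> y; rewrite !inE => /orP [/eqP ->|/orP [/eqP ->|/orP [/eqP ->|/orP [/eqP ->|/orP [/eqP ->|/eqP ->]]]]].
have [oD dD] := Dall_od _ lD.
exists b, (Dall [:: w; xu; (- 8^-1) *: xu; c; m; 0]), (phi @^-1` [set x | 2^-1 < x]).
split => //.
  split; last by rewrite /= phiq; lra.
  by apply: open_comp; [move=> x _; exact: cphi|exact: open_gt].
move=> r br Dr.
have Dw : Dm w r by apply: Dr; din.
have Dxu : Dm xu r by apply: Dr; din.
have Dxu' : Dm ((- 8^-1) *: xu) r by apply: Dr; din.
have Dc : Dm c r by apply: Dr; din.
have Dm' : Dm m r by apply: Dr; din.
have D0 : Dm 0 r by apply: Dr; din.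
have vxu : val xu r = 1 by apply: (hxu r Dxu).
have vc : val c r = val w r - 8^-1.
  by rewrite /c val_add // val_scale // vxu mulr1.
have vm : val m r = Num.max (val w r - 8^-1) 0.
  by rewrite /m val_join // vc val0.
have vb : val b r = e * Num.max (val w r - 8^-1) 0.
  by rewrite /b val_scale // vm.
have hw : `|phi r - val w r| <= 8^-1 by apply: ha.
move: hw; rewrite ler_norml => /andP [hw1 hw2].
have /andP [p0 p1] := phir r.
rewrite vb; split.
- rewrite -[X in _ <= X]mulr1; apply: ler_wpM2l; first exact: ltW.
  rewrite ge_max; apply/andP; split; lra.
- by move=> /phiV pr; rewrite max_r ?mulr0 //; lra.
- move=> /= pN; apply: mulr_gt0 => //; rewrite lt_max; apply/orP; left; lra.
Qed.


Lemma comp (u : E) (s : Sfun R X) : B u -> le 0 u -> is_S s ->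
  (forall q, sdom s q -> Dm u q -> sfn s q <= val u q) ->
  (forall q, Dm (-u) q -> sdom s q -> val (-u) q <= sfn s q) ->
  exists z, [/\ B z, le (-u) z, le z u & Seq s (T z)].
Proof.
move=> Bu u0 Ss hsu hsu2.
have Bnu : B (-u) by apply: bBopp.
pose A := [set w | [/\ B w, le (-u) w, le w u &
  forall q, Dm w q -> sdom s q -> val w q <= sfn s q]].
have Anu : A (-u).
  by split => //; [exact: (lrefl VL) | exact: (le0_opp VL _ u0)].
have ubA : exists v, is_ub le A v by exists u => w [].
have [z [zub zl]] := oc A (ex_intro _ (-u) Anu) ubA.
have Bz : B z by case: hB => _ hb; apply: (hb A) => // w [].
have zu : le z u by apply: zl => w [].
have nuz : le (-u) z by apply: zub.
have oDz : open (sdom s `&` Dm z) by apply: openI; [case: Ss | apply: Dm_open].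
have st1 : forall q, sdom s q -> Dm z q -> val z q <= sfn s q.
  move=> q sq zq; rewrite leNgt; apply/negP => lt.
  set e := (val z q - sfn s q) / 2.
  have e0 : 0 < e by rewrite /e; lra.
  have e1 : e < val z q - sfn s q by rewrite /e; lra.
  have [V [oV Vq sV hV]] := near_open R X (val z) (sfn s) (sdom s `&` Dm z) q e
    oDz (conj sq zq) (val_cont z q Bz zq) (is_S_cont R X s q Ss sq) e1.
  have [b [D0 [N [Bb b0 [oD0 dD0] [oN Nq] hb]]]] := bump q V e oV Vq e0.
  set z' := z - b.
  have Bnb : B (-b) by apply: bBopp.
  have Bz' : B z' by apply: bBsub.
  have lD : forall y, y \in [:: z; b; -b; z'] -> B y by lDtac.
  have [oDa dDa] := Dall_od _ lD.
  have dD : dense (Dall [:: z; b; -b; z'] `&` D0) by apply: denseI.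
  have ub' : is_ub le A z'.
    move=> w [Bw w1 w2 w3].
    apply: (reflect_le w z' _ Bw Bz' dD) => r rw rz' [Dr D0r].
    have Dz : Dm z r by apply: Dr; din.
    have Db : Dm b r by apply: Dr; din.
    have Dnb : Dm (-b) r by apply: Dr; din.
    have vz' : val z' r = val z r - val b r by rewrite /z' val_add // val_opp.
    have [hb1 hb2 hb3] := hb r Db D0r.
    rewrite vz'; case: (pselect (V r)) => Vr.
      have [sr _] := sV r Vr; have := hV r Vr; have := w3 r rw sr; lra.
    rewrite hb2 // subr0; apply: mono_val => //; exact: zub.
  have zz' := zl z' ub'.
  have b0' : le b 0.
    have := le_addr VL (b - z) _ _ zz'.
    have -> : z + (b - z) = b by rewrite addrCA subrr addr0.
    by have -> : z' + (b - z) = 0 by rewrite /z' addrA subrK subrr.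
  have bz : b = 0 := lanti VL _ _ b0' b0.
  have dbD : dense (Dm b `&` D0) by apply: denseI => //; [apply: Dm_open|apply: Dm_dense].
  have [r [Nr [Dbr D0r]]] := dense_ex X (Dm b `&` D0) N q dbD oN Nq.
  have [_ _ hb3] := hb r Dbr D0r.
  move: (hb3 Nr); rewrite bz in Dbr *; rewrite val0 // ltxx //.
have st2 : forall q, sdom s q -> Dm z q -> sfn s q <= val z q.
  move=> q sq zq; rewrite leNgt; apply/negP => lt.
  set e := (sfn s q - val z q) / 2.
  have e0 : 0 < e by rewrite /e; lra.
  have e1 : e < sfn s q - val z q by rewrite /e; lra.
  have [V [oV Vq sV hV]] := near_open R X (sfn s) (val z) (sdom s `&` Dm z) q e
    oDz (conj sq zq) (is_S_cont R X s q Ss sq) (val_cont z q Bz zq) e1.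
  have [b [D0 [N [Bb b0 [oD0 dD0] [oN Nq] hb]]]] := bump q V e oV Vq e0.
  set zb := z + b.
  set g := vmeet le zb u.
  have Bzb : B zb by apply: bBadd.
  have Bg : B g by apply: bBmeet.
  have Bnzb : B (-zb) by apply: bBopp.
  have Bj : B (vjoin le (-zb) (-u)) by apply: bBjoin.
  have nuzb : le (-u) zb := ltrans VL _ z _ nuz (le_addp VL z b b0).
  have lD : forall y, y \in [:: z; b; zb; g; u; -zb; -u; vjoin le (-zb) (-u)] -> B y
    by lDtac.
  have [oDa dDa] := Dall_od _ lD.
  set L := [:: z; b; zb; g; u; -zb; -u; vjoin le (-zb) (-u)].
  have dD : dense (Dall L `&` D0) by apply: denseI.
  have Ag : A g.
    split => //; first by apply: (meet_glb VL) => //; exact: (le0_opp VL _ u0).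
      exact: (vmeet_r VL).
    apply: (S_le_ext R X (T g) s (Dall L `&` D0) (TS _ Bg) Ss dD).
    move=> r rg sr [Dr D0r]; change (val g r <= sfn s r).
    have Dz : Dm z r by apply: Dr; din.
    have Db : Dm b r by apply: Dr; din.
    have Dzb : Dm zb r by apply: Dr; din.
    have h1 : val g r <= val zb r by apply: mono_val => //; exact: (vmeet_l VL).
    have h2 : val zb r = val z r + val b r by rewrite /zb val_add.
    have [hb1 hb2 hb3] := hb r Db D0r.
    case: (pselect (V r)) => Vr.
      by have := hV r Vr; lra.
    by have := st1 r sr Dz; rewrite h2 hb2 // in h1; lra.
  have gz : le g z := zub g Ag.
  have oNV : open (N `&` V) by apply: openI.
  have [r [[Nr Vr] [Dr D0r]]] := dense_ex X (Dall L `&` D0) (N `&` V) q dD oNV (conj Nq Vq).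
  have Dz : Dm z r by apply: Dr; din.
  have Db : Dm b r by apply: Dr; din.
  have Dzb : Dm zb r by apply: Dr; din.
  have Dg : Dm g r by apply: Dr; din.
  have Du : Dm u r by apply: Dr; din.
  have Dnzb : Dm (-zb) r by apply: Dr; din.
  have Dnu : Dm (-u) r by apply: Dr; din.
  have Dj : Dm (vjoin le (-zb) (-u)) r by apply: Dr; din.
  have [sr _] := sV r Vr.
  have h1 : val g r <= val z r by apply: mono_val.
  have h2 : val g r = - Num.max (- (val z r + val b r)) (- val u r).
    by rewrite /g /Defs.vmeet val_opp // val_join // !val_opp // /zb val_add.
  have [_ _ hb3] := hb r Db D0r.
  have h3 := hb3 Nr.
  have h4 := hV r Vr.
  have h5 := hsu r sr Du.
  have : Num.max (- (val z r + val b r)) (- val u r) < - val z r.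
    by rewrite gt_max; apply/andP; split; lra.
  lra.
exists z; split => // q sq zq.
by apply/eqP; rewrite eq_le st2 // st1.
Qed.

Lemma comp_abs (u y : E) (s : Sfun R X) : B u -> B y -> le (vabs le y) u -> is_S s ->
  (forall q, sdom s q -> Dm y q -> `|sfn s q| <= `|val y q|) ->
  exists z, [/\ B z, le (-u) z, le z u & Seq s (T z)].
Proof.
move=> Bu By yu Ss h.
have u0 : le 0 u := ltrans VL _ _ _ (abs_ge0 VL y) yu.
have Bny : B (-y) by apply: bBopp.
have Bay : B (vabs le y) by apply: bBjoin.
have Bnu : B (-u) by apply: bBopp.
have lD : forall w, w \in [:: y; -y; vabs le y; u; -u] -> B w by lDtac.
have [oL dL] := Dall_od _ lD.
set L := [:: y; -y; vabs le y; u; -u].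
apply: comp => //.
- apply: (S_le_ext R X s (T u) (Dall L) Ss (TS _ Bu) dL) => q sq uq Dq.
  change (sfn s q <= val u q).
  have Dy : Dm y q by apply: Dq; din.
  have Dny : Dm (-y) q by apply: Dq; din.
  have Day : Dm (vabs le y) q by apply: Dq; din.
  have va : val (vabs le y) q = `|val y q|.
    by rewrite /Defs.vabs val_join // val_opp // maxrN.
  have := mono_val (vabs le y) u q Bay Bu yu Day uq.
  have := h q sq Dy; have := ler_norm (sfn s q); rewrite va; lra.
- apply: (S_le_ext R X (T (-u)) s (Dall L) (TS _ Bnu) Ss dL) => q nuq sq Dq.
  change (val (-u) q <= sfn s q).
  have Dy : Dm y q by apply: Dq; din.
  have Dny : Dm (-y) q by apply: Dq; din.
  have Day : Dm (vabs le y) q by apply: Dq; din.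
  have Du : Dm u q by apply: Dq; din.
  have va : val (vabs le y) q = `|val y q|.
    by rewrite /Defs.vabs val_join // val_opp // maxrN.
  rewrite val_opp //.
  have := mono_val (vabs le y) u q Bay Bu yu Day Du.
  have := h q sq Dy; have := ler_norm (- sfn s q); rewrite normrN va; lra.
Qed.

End Comp.

Section Glue.
Context (R : realType) (E : lmodType R) (le : E -> E -> Prop)
  (VL : vector_lattice le) (oc : order_complete le)
  (I : Type) (B : I -> set E) (hB : forall a, is_band le (B a))
  (hdisj : forall a b, a <> b -> forall x y, B a x -> B b y -> vdisj le x y)
  (P : I -> E -> E)
  (hP : forall a x, B a (P a x) /\ forall b, B a b -> vdisj le (x - P a x) b).

Lemma glue (w : I -> E) (U : E) : (forall b, B b (w b)) -> (forall b, le 0 (w b)) ->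
  (forall b, le (w b) U) -> le 0 U -> exists S, forall a, P a S = w a.
Proof.
move=> Bw w0 wU U0.
pose A := [set v | v = 0 \/ exists b, v = w b].
have [S [Sub Sl]] : exists S, is_sup le A S.
  apply: oc; first by exists 0; left.
  by exists U => v [->|[b ->]].
exists S => a.
pose A' := [set v | v = 0 \/ exists2 b, b <> a & v = w b].
have [S' [Sub' Sl']] : exists S, is_sup le A' S.
  apply: oc; first by exists 0; left.
  by exists U => v [->|[b _ ->]].
have S'0 : le 0 S' by apply: Sub'; left.
have SS' : le S (w a + S').
  apply: Sl => v [->|[b ->]].
    by have := le_add2 VL _ _ _ _ (w0 a) S'0; rewrite addr0.
  case: (pselect (b = a)) => [->|ba]; first exact: le_addp.
  apply: (ltrans VL _ S'); first by apply: Sub'; right; exists b.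
  by have := le_addr VL S' _ _ (w0 a); rewrite add0r.
apply: (P_uniq VL (hB a) (P a) (hP a)) => // g Bg.
have Sw : le 0 (S - w a) by apply: (le_sub0 VL); apply: Sub; right; exists a.
have SwS' : le (S - w a) S'.
  by have := le_addr VL (- w a) _ _ SS'; rewrite addrAC subrr add0r.
rewrite /vdisj (abs_pos VL _ Sw).
apply: (lanti VL); last exact: (meet_ge0 VL _ _ Sw (abs_ge0 VL g)).
apply: (ltrans VL _ (vmeet le S' (vabs le g))); first exact: (meet_mono VL).
rewrite (sup_disj VL (vabs le g) (ex_intro _ 0 (or_introl erefl)) (conj Sub' Sl') (abs_ge0 VL g)).
  exact: lrefl.
move=> v [->|[b ba ->]].
  by split; [exact: lrefl|exact: (meet0 VL _ (abs_ge0 VL g))].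
split => //; rewrite -(abs_pos VL _ (w0 b)).
exact: (hdisj b a ba).
Qed.

End Glue.

Theorem corollary3p5 (R : realType) (E : lmodType R) (le : E -> E -> Prop)
  (I : Type) (B : I -> set E) (xu : I -> E) (P : I -> E -> E)
  (X : I -> topologicalType) (T : forall a : I, E -> Sfun R (X a)) :
  vector_lattice le ->
  order_complete le ->
  (* pairwise disjoint bands, each with a weak unit *)
  (forall a, is_band le (B a)) ->
  (forall a b, a <> b -> forall x y, B a x -> B b y -> vdisj le x y) ->
  (forall a, weak_unit le (B a) (xu a)) ->
  (* P a is the band projection onto B a *)
  (forall a x, B a (P a x) /\ forall b, B a b -> vdisj le (x - P a x) b) ->
  (* every x >= 0 is the supremum of its components y_a = P a x in B a *)
  (forall x, le 0 x -> is_sup le (range (fun a => P a x)) x) ->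
  (* the spaces X_a and the maps T_a *)
  (forall a, compact [set: X a] /\ hausdorff_space (X a)) ->
  (forall a, injective_lattice_hom le (B a) (T a)) ->
  (forall a, Seq (T a (xu a)) (Sone R (X a))) ->
  (forall a (s : Sfun R (X a)), is_S s ->
     (in_sup_closure (T a @` gen_ideal le (B a) (xu a)) s <-> in_CX s)) ->
  (* conclusion: T(E), T x := (T_a (P a x))_a, is an ideal of
     S(X) = prod_a S(X_a) *)
  let TE := fun (x : E) (a : I) => T a (P a x) in
  (forall x y, exists z, forall a, Seq (TE z a) (Sadd (TE x a) (TE y a))) /\
  (forall (c : R) x, exists z, forall a, Seq (TE z a) (Sscale c (TE x a))) /\
  (forall (s : forall a, Sfun R (X a)) (x : E),
     (forall a, is_S (s a)) ->
     (forall a, Sle (Sabs (s a)) (Sabs (TE x a))) ->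
     exists y, forall a, Seq (s a) (TE y a)).
Proof.
move=> VL oc hB hdisj hwu hP hsup hX hT hone hcl TE.
split.
  move=> x y; exists (x + y) => a; rewrite /TE (P_add VL (hB a) (P a) (hP a)).
  case: (hT a) => _ [hadd _]; apply: hadd; [exact: (hP a x).1|exact: (hP a y).1].
split.
  move=> c x; exists (c *: x) => a; rewrite /TE (P_scale VL (hB a) (P a) (hP a)).
  case: (hT a) => _ [_ [hsc _]]; apply: hsc; exact: (hP a x).1.
move=> s x hs hsx.
set u := fun a => P a (vabs le x).
have hz : forall a, exists z, [/\ B a z, le (- u a) z, le z (u a) & Seq (s a) (T a z)].
  move=> a.
  have Bxu : B a (xu a) by case: (hwu a).
  have hcl' : forall s0, is_S s0 -> in_CX s0 ->
      in_sup_closure (T a @` gen_ideal le (B a) (xu a)) s0.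
    by move=> s0 S0 C0; apply/(hcl a s0 S0).
  have [hC hH] := hX a.
  apply: (comp_abs R E le VL (X a) (B a) (hB a) (T a) (hT a) (xu a) Bxu (hone a)
    hcl' hC hH oc (u a) (P a x) (s a)).
  - exact: (hP a _).1.
  - exact: (hP a _).1.
  - exact: (P_abs VL (hB a) (P a) (hP a)).
  - exact: hs.
  - by move=> q sq Dq; apply: (hsx a).
case: (choice hz) => zf hzf.
have absz a : le (vabs le (zf a)) (vabs le x).
  have [_ h1 h2 _] := hzf a.
  apply: (ltrans VL _ (u a)).
    apply: (abs_lub VL _ _ h2).
    by have := le_opp VL _ _ h1; rewrite opprK.
  by apply: (hsup _ (abs_ge0 VL x)).1; exists a.
have [Sp hSp] : exists S, forall a, P a S = vjoin le (zf a) 0.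
  apply: (glue R E le VL oc I B hB hdisj P hP _ (vabs le x)) => //.
  - move=> b; have [Bz _ _ _] := hzf b.
    apply: (Bjoin VL (hB b)) => //; exact: (B0 (hB b)).
  - move=> b; exact: (vjoin_r VL).
  - move=> b; apply: (ltrans VL _ _ _ _ (absz b)).
    exact: (join_lub VL _ _ _ (abs_ge VL _) (abs_ge0 VL _)).
  - exact: (abs_ge0 VL).
have [Sn hSn] : exists S, forall a, P a S = vjoin le (- zf a) 0.
  apply: (glue R E le VL oc I B hB hdisj P hP _ (vabs le x)) => //.
  - move=> b; have [Bz _ _ _] := hzf b.
    apply: (Bjoin VL (hB b)); [exact: (Bopp (hB b))|exact: (B0 (hB b))].
  - move=> b; exact: (vjoin_r VL).
  - move=> b; apply: (ltrans VL _ _ _ _ (absz b)).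
    exact: (join_lub VL _ _ _ (abs_geN VL _) (abs_ge0 VL _)).
  - exact: (abs_ge0 VL).
exists (Sp - Sn) => a.
rewrite /TE (P_sub VL (hB a) (P a) (hP a)) hSp hSn (posneg VL).
by case: (hzf a).
Qed.
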